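(* Let $\eta\in[0,1]$ and let $\hat n_1,\hat n_2,\hat n_3\in\mathbb{R}^3$ be arbitrary unit vectors. For $k\in\{1,2,3\}$ let $M_k=\{E^k_+,E^k_-\}$ be the qubit POVM with $E^k_{\pm}=\tfrac12 I\pm\tfrac{\eta}{2}\vec\sigma\cdot\hat n_k$, and suppose the three POVMs are pairwise jointly measurable. Then there is no state-independent violation of the LSW inequality: there do not exist pairwise joint measurements $G_{12},G_{23},G_{13}$ (of $\{M_1,M_2\}$, $\{M_2,M_3\}$, $\{M_1,M_3\}$ respectively) such that $$R_3^Q(\rho)\equiv\frac13\sum_{(ij)\in\{(12),(23),(13)\}}\mathrm{Tr}\big(\rho\,(G^{ij}_{+-}+G^{ij}_{-+})\big)>1-\frac{\eta}{3}$$ holds for every qubit density operator $\rho$.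
   Context: $\vec\sigma=(\sigma_x,\sigma_y,\sigma_z)$ is the vector of Pauli matrices and $I$ the $2\times 2$ identity. A pairwise joint measurement of $\{M_i,M_j\}$ is a qubit POVM $G_{ij}=\{G^{ij}_{X_iX_j}\}_{X_i,X_j\in\{+,-\}}$ (so $G^{ij}_{X_iX_j}\ge 0$ and $\sum G^{ij}_{X_iX_j}=I$) satisfying $\sum_{X_j}G^{ij}_{X_iX_j}=E^i_{X_i}$ and $\sum_{X_i}G^{ij}_{X_iX_j}=E^j_{X_j}$. The POVMs are pairwise jointly measurable if such $G_{ij}$ exist for all three pairs. The quantity $R_3^Q(\rho)$ is the average probability of anticorrelated outcomes when one of the three pairs is chosen uniformly at random and jointly measured on $\rho$. *)

(* Defs.v *)
From HB Require Import structures.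
From mathcomp Require Import all_boot all_order all_algebra.
From mathcomp Require Import complex.
Set Implicit Arguments. Unset Strict Implicit. Unset Printing Implicit Defensive.
Import Order.TTheory GRing.Theory Num.Theory.
Local Open Scope ring_scope.
Local Open Scope complex_scope.

Section Qubit.
Variable R : rcfType.
Local Notation C := R[i].

Definition adjmx (m n : nat) (A : 'M[C]_(m, n)) : 'M[C]_(n, m) :=
  (map_mx Num.conj A)^T.

(* Positive semidefinite 2x2 operator: <v, A v> >= 0 for all v
   (over C this also forces A to be Hermitian). *)
Definition psd (A : 'M[C]_2) : Prop :=
  forall v : 'cV[C]_2, 0 <= (adjmx v *m A *m v) 0 0.

Definition density (rho : 'M[C]_2) : Prop := psd rho /\ \tr rho = 1.

Definition sigma_x : 'M[C]_2 := \matrix_(i, j) (if i == j then 0 else 1).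
Definition sigma_y : 'M[C]_2 :=
  \matrix_(i, j) (if i == j then 0 else if (i : nat) == 0%N then - 'i else 'i).
Definition sigma_z : 'M[C]_2 :=
  \matrix_(i, j) (if i == j then (if (i : nat) == 0%N then 1 else -1) else 0).

Definition sigma_dot (n : 'rV[R]_3) : 'M[C]_2 :=
  (n 0 0)%:C *: sigma_x + (n 0 1)%:C *: sigma_y + (n 0 2)%:C *: sigma_z.

Definition unit_vec (n : 'rV[R]_3) : Prop := \sum_(k < 3) n 0 k ^+ 2 = 1.

Definition Eeff (eta : R) (n : 'rV[R]_3) (s : bool) : 'M[C]_2 :=
  (1 / 2)%:M + ((if s then 1 else -1) * eta / 2)%:C *: sigma_dot n.

Definition joint_meas (Ea Eb : bool -> 'M[C]_2) (G : bool -> bool -> 'M[C]_2)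
  : Prop :=
  (forall a b, psd (G a b)) /\
  \sum_(a : bool) \sum_(b : bool) G a b = 1%:M /\
  (forall a, \sum_(b : bool) G a b = Ea a) /\
  (forall b, \sum_(a : bool) G a b = Eb b).

Definition jointly_measurable (Ea Eb : bool -> 'M[C]_2) : Prop :=
  exists G, joint_meas Ea Eb G.

Definition anticorr (rho : 'M[C]_2) (G : bool -> bool -> 'M[C]_2) : C :=
  \tr (rho *m (G true false + G false true)).

Definition R3Q (rho : 'M[C]_2) (G12 G23 G13 : bool -> bool -> 'M[C]_2) : C :=
  (anticorr rho G12 + anticorr rho G23 + anticorr rho G13) / 3.

End Qubit.

(* Main.v *)
Require Import Defs.
From HB Require Import structures.
From mathcomp Require Import all_boot all_order all_algebra.
From mathcomp Require Import complex ring lra.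
Import Order.TTheory GRing.Theory Num.Theory.
Local Open Scope ring_scope.
Local Open Scope complex_scope.
Section S.
Variable R : rcfType.
Local Notation C := R[i].
Lemma big_ord2 (F : 'I_2 -> C) : \sum_(i < 2) F i = F 0 + F 1.
Proof. by rewrite big_ord_recl big_ord1; congr (_ + F _); apply: val_inj. Qed.
Definition Q (w : 'cV[C]_2) (A : 'M[C]_2) : C := (adjmx w *m A *m w) 0 0.

Lemma Q_exp w A : Q w A = (w 0 0)^* * (A 0 0 * w 0 0 + A 0 1 * w 1 0)
   + (w 1 0)^* * (A 1 0 * w 0 0 + A 1 1 * w 1 0).
Proof. rewrite /Q /adjmx !mxE !big_ord2 !mxE !big_ord2 !mxE. ring. Qed.

Lemma QD w A B : Q w (A + B) = Q w A + Q w B.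
Proof. by rewrite /Q mulmxDr mulmxDl mxE. Qed.
Lemma QZ w k A : Q w (k *: A) = k * Q w A.
Proof. by rewrite /Q -scalemxAr -scalemxAl mxE. Qed.

Lemma trQ w c A : \tr (c *: (w *m adjmx w) *m A) = c * Q w A.
Proof.
rewrite Q_exp /mxtrace !big_ord2 !mxE !big_ord2 !mxE !big_ord1 !mxE. ring.
Qed.

Lemma unitE (n : 'rV[R]_3) : unit_vec n -> n 0 0 ^+ 2 + n 0 1 ^+ 2 + n 0 2 ^+ 2 = 1.
Proof. rewrite /unit_vec !big_ord_recr big_ord0 /= add0r => <-. by congr (n 0 _ ^+ 2 + n 0 _ ^+ 2 + n 0 _ ^+ 2); apply: val_inj. Qed.

Lemma rho_psd (w : 'cV[C]_2) (c : C) : 0 <= c -> psd (c *: (w *m adjmx w)).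
Proof.
move=> hc v. set a := (w 0 0)^* * v 0 0 + (w 1 0)^* * v 1 0.
have -> : (adjmx v *m (c *: (w *m adjmx w)) *m v) 0 0 = c * (a * a^*).
  rewrite /a rmorphD !rmorphM /= !conjCK /adjmx !mxE !big_ord2 !mxE !big_ord2 !mxE !big_ord1 !mxE. ring.
by apply: mulr_ge0 => //; apply: mul_conjC_ge0.
Qed.

Lemma anticorr_le (w : 'cV[C]_2) (c : C) (Ea Eb : bool -> 'M[C]_2) G s :
  0 <= c -> joint_meas Ea Eb G ->
  anticorr (c *: (w *m adjmx w)) G <= c * (Q w (Ea s) + Q w (Eb s)).
Proof.
move=> hc [hpsd [_ [h1 h2]]].
rewrite /anticorr trQ -h1 -h2 !big_bool /= !QD -subr_ge0.
have hq : 0 <= Q w (G s s) := hpsd s s w.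
case: s hq => hq.
  rewrite (_ : _ - _ = c * (Q w (G true true) + Q w (G true true))); last by ring.
  by apply: mulr_ge0 => //; apply: addr_ge0.
rewrite (_ : _ - _ = c * (Q w (G false false) + Q w (G false false))); last by ring.
by apply: mulr_ge0 => //; apply: addr_ge0.
Qed.

Lemma h2 (r : R) : (r / 2)%:C = r%:C / 2 :> C.
Proof. by rewrite rmorphM /= fmorphV /= rmorph_nat. Qed.
Lemma h3 (r : R) : (1 - r / 3)%:C = 1 - r%:C / 3 :> C.
Proof. by rewrite rmorphB /= rmorph1 rmorphM /= fmorphV /= rmorph_nat. Qed.

Lemma QE (w : 'cV[C]_2) eta n s : Q w (Eeff eta n s) =
  Q w 1%:M / 2 + (if s then 1 else -1) * eta%:C / 2 * Q w (sigma_dot n).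
Proof.
rewrite /Eeff QD -scalemx1 !QZ h2.
case: s; rewrite ?rmorphM /= ?rmorphN /= rmorph1; ring.
Qed.

Lemma final (c q1 e s1 s2 s3 A12 A23 A13 a1t a1f a2t a3t a3f L : C) :
  c * q1 = 1 -> s2 = -q1 ->
  a1t = q1/2 + 1*e/2*s1 -> a1f = q1/2 + (-1)*e/2*s1 -> a2t = q1/2 + 1*e/2*s2 ->
  a3t = q1/2 + 1*e/2*s3 -> a3f = q1/2 + (-1)*e/2*s3 -> 0 <= c ->
  A12 <= c*(a1t + a2t) -> A23 <= c*(a2t + a3t) -> A13 <= c*(a1f + a3f) ->
  L = 1 - e/3 -> ~ (L < (A12 + A23 + A13)/3).
Proof.
move=> hcq hs -> -> -> -> -> hc h12 h23 h13 -> hlt.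
have h3p : 0 <= (3:C)^-1 by rewrite invr_ge0 ler0n.
have hle := ler_wpM2r h3p (lerD (lerD h12 h23) h13).
have := lt_le_trans hlt hle.
rewrite hs.
rewrite [X in _ < X](_ : _ = (c * q1) * (3 - e) / 3); last by field.
rewrite hcq (_ : 1 * (3 - e) / 3 = 1 - e / 3) ?ltxx //.
by field.
Qed.
End S.
Arguments Q {R}. Arguments Q_exp {R}. Arguments QD {R}. Arguments QZ {R}. Arguments trQ {R}.
Arguments rho_psd {R}. Arguments anticorr_le {R}. Arguments QE {R}. Arguments final {R c q1 e s1 s2 s3 A12 A23 A13 a1t a1f a2t a3t a3f L}. Arguments h3 {R}.
Section T.
Variable R : rcfType.
Local Notation C := R[i].
Lemma alg1 (X Y Z I J : C) : I^+2 = -1 -> J = I -> X^+2+Y^+2+Z^+2 = 1 ->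
  (X*1 + Y * - I + Z*0) * (X*1 + Y*J + Z*0) = 1 - Z^+2.
Proof.
move=> hI -> hn.
transitivity (X ^+ 2 - I ^+ 2 * Y ^+ 2 + 0 * Z); first by ring.
rewrite hI; transitivity ((X^+2+Y^+2+Z^+2) - Z^+2); first by ring. by rewrite hn.
Qed.
Lemma eigvec (n : 'rV[R]_3) : unit_vec n -> exists w : 'cV[C]_2,
  (w 0 0 != 0 \/ w 1 0 != 0) /\ sigma_dot n *m w = - w.
Proof.
move/unitE => hn.
set x := n 0 0 in hn *; set y := n 0 1 in hn *; set z := n 0 2 in hn *.
have [hz|hz] := eqVneq z 1.
  have hxy : x = 0 /\ y = 0.
    move: hn; rewrite hz expr1n => hn.
    have h : x ^+ 2 + y ^+ 2 = 0 by lra.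
    by move/eqP: h; rewrite paddr_eq0 ?sqr_ge0 // !sqrf_eq0 => /andP[/eqP -> /eqP ->].
  exists (\col_i (if (i : nat) == 0%N then 0 else 1)); split; first by right; rewrite mxE oner_eq0.
  apply/matrixP => i j; rewrite ord1 /sigma_dot !mxE big_ord2 !mxE.
  rewrite -/x -/y -/z hz; case: hxy => -> ->.
  by case: i => -[|[|//]] ? /=; rewrite ?rmorph0 ?rmorph1; ring.
have hnC : (x%:C) ^+ 2 + (y%:C) ^+ 2 + (z%:C) ^+ 2 = 1 :> C.
  by rewrite -!rmorphXn -!rmorphD hn rmorph1.
set S := sigma_dot n.
have h00 : S 0 0 = z%:C by rewrite /S /sigma_dot !mxE /= !mulr0 !add0r mulr1.
have h11 : S 1 1 = - z%:C by rewrite /S /sigma_dot !mxE /= !mulr0 !add0r mulrN1.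
have h01 : S 0 1 * S 1 0 = 1 - z%:C ^+ 2.
  rewrite /S /sigma_dot !mxE /= -/x -/y -/z.
  by apply: alg1 => //; exact: sqr_i.
clearbody S.
exists (\col_i (if (i : nat) == 0%N then 1 - z%:C else - S 1 0)); split.
  left; rewrite mxE /= subr_eq0; apply/eqP => -[h].
  by move: hz; rewrite -h eqxx.
apply/matrixP => i j; rewrite ord1.
have [->|->] : i = 0 \/ i = 1 by case: i => -[|[|//]] ?; [left|right]; apply: val_inj.
  rewrite !mxE big_ord2 !mxE /= h00.
  transitivity (z%:C * (1 - z%:C) - S 0 1 * S 1 0); first by ring.
  rewrite h01; ring.
rewrite !mxE big_ord2 !mxE /= h11; ring.
Qed.
End T.

Theorem mainTheorem1 (R : rcfType) (eta : R) (n1 n2 n3 : 'rV[R]_3) :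
  0 <= eta <= 1 ->
  unit_vec n1 -> unit_vec n2 -> unit_vec n3 ->
  jointly_measurable (Eeff eta n1) (Eeff eta n2) ->
  jointly_measurable (Eeff eta n2) (Eeff eta n3) ->
  jointly_measurable (Eeff eta n1) (Eeff eta n3) ->
  ~ (exists G12 G23 G13 : bool -> bool -> 'M[R[i]]_2,
       [/\ joint_meas (Eeff eta n1) (Eeff eta n2) G12,
           joint_meas (Eeff eta n2) (Eeff eta n3) G23,
           joint_meas (Eeff eta n1) (Eeff eta n3) G13 &
           forall rho : 'M[R[i]]_2, density rho ->
             (1 - eta / 3)%:C < R3Q rho G12 G23 G13]).
Proof.
move=> _ _ hn2 _ _ _ _ [G12 [G23 [G13 [j12 j23 j13 hlt]]]].
have [w [hw0 hSw]] := @eigvec R n2 hn2.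
set q1 := Q w 1%:M.
have hq1 : 0 < q1.
  rewrite /q1 Q_exp !mxE /=.
  rewrite [X in 0 < X](_ : _ = w 0 0 * (w 0 0)^* + w 1 0 * (w 1 0)^*); last by ring.
  case: hw0 => h.
    by apply: ltr_wpDr; [exact: mul_conjC_ge0 | rewrite mul_conjC_gt0].
  by apply: ltr_wpDl; [exact: mul_conjC_ge0 | rewrite mul_conjC_gt0].
set c := q1^-1.
have hc : 0 <= c by rewrite /c invr_ge0 ltW.
have hcq : c * q1 = 1 by rewrite /c mulVf // lt0r_neq0.
have hS : Q w (sigma_dot n2) = - q1.
  by rewrite /q1 /Q -mulmxA hSw mulmxN mulmx1 mxE.
have hrho : density (c *: (w *m adjmx w)).
  split; first exact: rho_psd.
  by have := @trQ R w c 1%:M; rewrite mulmx1 => ->.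
have hl := hlt _ hrho.
have a12 := @anticorr_le R w c _ _ _ true hc j12.
have a23 := @anticorr_le R w c _ _ _ true hc j23.
have a13 := @anticorr_le R w c _ _ _ false hc j13.
exact: (final hcq hS (QE w eta n1 true) (QE w eta n1 false) (QE w eta n2 true)
  (QE w eta n3 true) (QE w eta n3 false) hc a12 a23 a13 (h3 eta) hl).
Qed.
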